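(* Let $h_2,h_4,h_5$ and $\psi_2,\psi_4,\psi_5$ be as in the context. Then: (i)(a) $h_2(x)\ge h_5(x)\ge h_4(x)$ for all $x\ge0$; (i)(b) $h_2^{-1}(y)\le h_5^{-1}(y)\le h_4^{-1}(y)$ for all $y\ge 0$. (ii)(a) $h_2(x)\ge (x/2)\log(1+x)\ge (x/2)\log(1+x/2)$ for all $x\ge0$; (ii)(b) $h_4(x)\ge (x/2)\log(1+x/2)$ for all $x\ge0$; (ii)(c) $h_5(x)\ge (x/2)\log(1+x/2)$ for all $x\ge 0$. (iii)(a) $h_2(x)\sim x^2/2$ as $x\searrow0$ and $h_2(x)\sim x\log x$ as $x\to\infty$; (iii)(b) $h_4(x)\sim x^2/4$ as $x\searrow0$ and $h_4(x)\sim \frac12 x\log x$ as $x\to\infty$; (iii)(c) $h_5(x)\sim x^2/4$ as $x\searrow 0$ and $h_5(x)\sim x\log x$ as $x\to\infty$; (iii)(d) $h_2(x)-h_4(x)\sim x^2/4$ as $x\searrow0$ and $h_2(x)-h_4(x)\sim\frac12x\log x$ as $x\to\infty$; (iii)(e) $h_2(x)-h_5(x)\sim x^2/4$ as $x\searrow 0$ and $h_2(x)-h_5(x)\sim\log x$ as $x\to\infty$. (iv)(a) For $x>0$, $\psi_2(x)\ge x^{-1}\log(1+x)$ and $\psi_2(x)\ge (1+x/3)^{-1}$. (iv)(b) For $x>0$, $\psi_4(x)\ge 2x^{-1}\log(1+x/2)$ and $\psi_4(x)\ge \frac{1/2}{1+x/2}$; moreover for every $\delta\in(0,1/2)$, $\psi_4(x)\ge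 \frac{1-\delta}{1+x/2}$ whenever $0<x\le 2\delta^{1/2}/(1/2-\delta)^{1/2}$. (iv)(c) For $x>0$, $\psi_5(x)\ge 2x^{-1}\log(1+x/2)$ and $\psi_5(x)\ge \frac{1}{1+x/2}$.
   Context: For $x\ge0$: $h_2(x)=(1+x)\log(1+x)-x$ (Bennett); $h_4(x)=(x/2)\,\mathrm{arcsinh}(x/2)=(x/2)\log\big(x/2+\sqrt{1+(x/2)^2}\big)$ (Prokhorov); $h_5(x)=x\,\mathrm{arcsinh}(x/2)-2\big(\cosh(\mathrm{arcsinh}(x/2))-1\big)$ (Kruglov). Each is an increasing bijection of $[0,\infty)$ onto itself, with inverses $h_2^{-1},h_4^{-1},h_5^{-1}$. For $x>0$ define $\psi_2,\psi_4,\psi_5$ by $h_2(x)=\frac{x^2}{2}\psi_2(x)$, $h_4(x)=\frac{x^2}{4}\psi_4(x)$, $h_5(x)=\frac{x^2}{4}\psi_5(x)$. Here $f\sim g$ means $f/g\to1$. *)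

(* Defs.v *)
From Stdlib Require Import Reals ClassicalEpsilon.
From Coquelicot Require Import Coquelicot.
Open Scope R_scope.

Definition arcsinh (t : R) : R := ln (t + sqrt (1 + t ^ 2)).

Definition h2 (x : R) : R := (1 + x) * ln (1 + x) - x.
Definition h4 (x : R) : R := (x / 2) * arcsinh (x / 2).
Definition h5 (x : R) : R := x * arcsinh (x / 2) - 2 * (cosh (arcsinh (x / 2)) - 1).

Definition hinv (h : R -> R) (y : R) : R :=
  epsilon (inhabits 0) (fun x => 0 <= x /\ h x = y).

Definition psi2 (x : R) : R := h2 x / (x ^ 2 / 2).
Definition psi4 (x : R) : R := h4 x / (x ^ 2 / 4).
Definition psi5 (x : R) : R := h5 x / (x ^ 2 / 4).

Definition equiv_at_0plus (f g : R -> R) : Prop :=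
  filterlim (fun x => f x / g x) (at_right 0) (locally 1).
Definition equiv_at_infty (f g : R -> R) : Prop :=
  filterlim (fun x => f x / g x) (Rbar_locally p_infty) (locally 1).

(* Main.v *)
Require Import Defs.
From Stdlib Require Import Reals Lra ClassicalEpsilon.
From Coquelicot Require Import Coquelicot.
Open Scope R_scope.


Lemma ballR (x e y : R) : Rabs (y - x) < e -> ball x e y.
Proof. intros H. exact H. Qed.

Lemma mvt_le (f df : R -> R) u v : 0 <= u <= v ->
  (forall c, 0 <= c -> is_derive f c (df c)) ->
  (forall c, 0 < c -> 0 <= df c) -> f u <= f v.
Proof.
  intros [Hu Huv] Hd Hp. destruct (Req_dec u v) as [->|Hne]; [lra|].
  destruct (MVT_cor2 f df u v) as [c [Hc1 Hc2]]; [lra| |].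
  - intros c Hc. apply is_derive_Reals. apply Hd. lra.
  - assert (0 <= df c) by (apply Hp; lra). nra.
Qed.

Lemma mvt_lt (f df : R -> R) u v : 0 <= u < v ->
  (forall c, 0 <= c -> is_derive f c (df c)) ->
  (forall c, 0 < c -> 0 < df c) -> f u < f v.
Proof.
  intros [Hu Huv] Hd Hp.
  destruct (MVT_cor2 f df u v) as [c [Hc1 Hc2]]; [lra| |].
  - intros c Hc. apply is_derive_Reals. apply Hd. lra.
  - assert (0 < df c) by (apply Hp; lra). nra.
Qed.

Lemma ln_le_m1 x : 0 < x -> ln x <= x - 1.
Proof. intros Hx. pose proof (exp_ineq1_le (ln x)). rewrite exp_ln in H; lra. Qed.

Definition sqh t := sqrt (1 + t ^ 2).

Lemma sq_pos t : 0 < sqh t.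
Proof. unfold sqh. apply sqrt_lt_R0. nra. Qed.
Lemma sq_sq t : sqh t * sqh t = 1 + t ^ 2.
Proof. unfold sqh. apply sqrt_sqrt. nra. Qed.
Lemma sq_ge1 t : 1 <= sqh t.
Proof. pose proof (sq_sq t); pose proof (sq_pos t). nra. Qed.
Lemma sq_gt t : t < sqh t.
Proof. pose proof (sq_sq t); pose proof (sq_pos t). nra. Qed.
Lemma sq_gtm t : - t < sqh t.
Proof. pose proof (sq_sq t); pose proof (sq_pos t). nra. Qed.
Lemma sq_le t : 0 <= t -> sqh t <= t + 1.
Proof. intros. pose proof (sq_sq t); pose proof (sq_pos t). nra. Qed.
Lemma tsq_pos t : 0 < t + sqh t.
Proof. pose proof (sq_gtm t). lra. Qed.

Lemma arcsinh_sq t : Defs.arcsinh t = ln (t + sqh t).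
Proof. reflexivity. Qed.

Lemma cosh_arcsinh t : cosh (Defs.arcsinh t) = sqh t.
Proof.
  unfold cosh. rewrite arcsinh_sq, exp_Ropp, exp_ln by apply tsq_pos.
  pose proof (tsq_pos t). pose proof (sq_sq t).
  assert (E : / (t + sqh t) = sqh t - t).
  { apply Rmult_eq_reg_l with (t + sqh t); [|lra]. rewrite Rinv_r by lra. nra. }
  rewrite E. lra.
Qed.

Lemma d_sq t : is_derive sqh t (t / sqh t).
Proof.
  unfold sqh. auto_derive. { pose proof (pow2_ge_0 t). lra. } replace (t * (t * 1)) with (t ^ 2) by ring. fold (sqh t). pose proof (sq_pos t). field. lra.
Qed.

Lemma d_arcsinh t : is_derive Defs.arcsinh t (/ sqh t).
Proof.
  unfold Defs.arcsinh. auto_derive; replace (t * (t * 1)) with (t ^ 2) by ring; fold (sqh t).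
  { pose proof (pow2_ge_0 t). pose proof (tsq_pos t). repeat split; lra. }
  pose proof (sq_pos t). pose proof (tsq_pos t). pose proof (sq_sq t).
  replace (t * sqh t + sqh t ^ 2) with ((t + sqh t) * sqh t) by ring.
  field; lra.
Qed.


Lemma h5_eq x : h5 x = x * ln (x/2 + sqrt (1 + (x/2)^2)) - 2 * (sqrt (1 + (x/2)^2) - 1).
Proof. unfold h5. rewrite cosh_arcsinh. reflexivity. Qed.

Ltac normsq x := 
  replace (1 + x * / 2 * (x * / 2 * 1)) with (1 + (x/2)^2) by (unfold Rdiv; ring);
  change (sqrt (1 + (x/2)^2)) with (sqh (x/2));
  replace (x * / 2 + sqh (x/2)) with (x/2 + sqh (x/2)) by reflexivity;
  change (ln (x/2 + sqh (x/2))) with (Defs.arcsinh (x/2)).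

Lemma d_h5 x : is_derive h5 x (Defs.arcsinh (x/2)).
Proof.
  apply is_derive_ext with (fun x => x * ln (x/2 + sqrt (1 + (x/2)^2)) - 2 * (sqrt (1 + (x/2)^2) - 1)).
  { intros; symmetry; apply h5_eq. }
  auto_derive; normsq x.
  { pose proof (pow2_ge_0 (x/2)). pose proof (tsq_pos (x/2)). repeat split; lra. }
  pose proof (sq_pos (x/2)). pose proof (tsq_pos (x/2)). pose proof (sq_sq (x/2)).
  set (s := sqh (x/2)) in *. set (a := Defs.arcsinh (x/2)). field. lra.
Qed.

Lemma sq0 : sqh 0 = 1.
Proof. unfold sqh. replace (1 + 0^2) with 1 by ring. apply sqrt_1. Qed.
Lemma arcsinh0 : Defs.arcsinh 0 = 0.
Proof. rewrite arcsinh_sq, sq0, Rplus_0_l. apply ln_1. Qed.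
Lemma h2_0 : h2 0 = 0.
Proof. unfold h2. rewrite Rplus_0_r, ln_1. ring. Qed.
Lemma h4_0 : h4 0 = 0.
Proof. unfold h4. replace (0/2) with 0 by field. rewrite arcsinh0. ring. Qed.
Lemma h5_0 : h5 0 = 0.
Proof. unfold h5. replace (0/2) with 0 by field. rewrite cosh_arcsinh, arcsinh0, sq0. ring. Qed.

Lemma d_h2 x : 0 <= x -> is_derive h2 x (ln (1 + x)).
Proof. intros Hx. unfold h2. auto_derive. lra. field. lra. Qed.

Lemma d_h4 x : is_derive h4 x (Defs.arcsinh (x/2) / 2 + x / (4 * sqh (x/2))).
Proof.
  unfold h4, Defs.arcsinh. auto_derive; normsq x.
  { pose proof (pow2_ge_0 (x/2)). pose proof (tsq_pos (x/2)). repeat split; lra. }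
  pose proof (sq_pos (x/2)). pose proof (tsq_pos (x/2)). pose proof (sq_sq (x/2)).
  set (s := sqh (x/2)) in *. set (a := Defs.arcsinh (x/2)). field. lra.
Qed.

Lemma L1 x : 0 <= x -> 2 * x / (2 + x) <= ln (1 + x).
Proof.
  intros Hx.
  assert (H := mvt_le (fun x => ln (1 + x) - 2 * x / (2 + x))
     (fun x => x ^ 2 / ((1 + x) * (2 + x) ^ 2)) 0 x).
  cbv beta in H. rewrite Rplus_0_r, ln_1 in H.
  assert (0 <= ln (1 + x) - 2 * x / (2 + x)); [|lra].
  replace 0 with (0 - 2 * 0 / (2 + 0)) by field. apply H; [lra| |].
  - intros c Hc. auto_derive. lra. field. lra.
  - intros c Hc. unfold Rdiv. apply Rmult_le_pos. nra.
    apply Rlt_le, Rinv_0_lt_compat. nra.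
Qed.

Lemma L2 x : 0 <= x -> h2 x <= x ^ 2 / 2.
Proof.
  intros Hx.
  assert (H := mvt_le (fun x => x ^ 2 / 2 - h2 x) (fun x => x - ln (1 + x)) 0 x).
  cbv beta in H. rewrite h2_0 in H.
  assert (0 <= x ^ 2 / 2 - h2 x); [|lra].
  replace 0 with (0 ^ 2 / 2 - 0) by field. apply H; [lra| |].
  - intros c Hc. apply (is_derive_minus (fun x => x ^ 2 / 2) h2).
    + auto_derive. auto. field.
    + apply d_h2; lra.
  - intros c Hc. pose proof (ln_le_m1 (1 + c)). lra.
Qed.

Lemma L3 x : 0 <= x -> 3 * x ^ 2 / (2 * x + 6) <= h2 x.
Proof.
  intros Hx.
  assert (H := mvt_le (fun x => h2 x - 3 * x ^ 2 / (2 * x + 6))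
     (fun x => ln (1 + x) - 3 * x * (x + 6) / (2 * (x + 3) ^ 2)) 0 x).
  cbv beta in H. rewrite h2_0 in H.
  assert (0 <= h2 x - 3 * x ^ 2 / (2 * x + 6)); [|lra].
  replace 0 with (0 - 3 * 0 ^ 2 / (2 * 0 + 6)) by field. apply H; [lra| |].
  - intros c Hc. apply (is_derive_minus h2 (fun x => 3 * x ^ 2 / (2 * x + 6))).
    + apply d_h2; lra.
    + auto_derive. lra. field. lra.
  - intros c Hc. pose proof (L1 c ltac:(lra)).
    assert (E : 2 * c / (2 + c) - 3 * c * (c + 6) / (2 * (c + 3) ^ 2)
               = c ^ 3 / (2 * (2 + c) * (c + 3) ^ 2)) by (field; lra).
    assert (0 <= c ^ 3 / (2 * (2 + c) * (c + 3) ^ 2)).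
    { unfold Rdiv. apply Rmult_le_pos. pose proof (pow_le c 3). lra.
      apply Rlt_le, Rinv_0_lt_compat. nra. }
    set (A := 2 * c / (2 + c)) in *. set (B := 3 * c * (c + 6) / (2 * (c + 3) ^ 2)) in *.
    set (C := c ^ 3 / (2 * (2 + c) * (c + 3) ^ 2)) in *. lra.
Qed.

Lemma L4 t : 0 <= t -> Defs.arcsinh t <= t.
Proof.
  intros Ht.
  assert (H := mvt_le (fun t => t - Defs.arcsinh t) (fun t => 1 - / sqh t) 0 t).
  cbv beta in H. rewrite arcsinh0 in H.
  assert (0 <= t - Defs.arcsinh t); [|lra].
  replace 0 with (0 - 0) by ring. apply H; [lra| |].
  - intros c Hc. apply (is_derive_minus (fun t => t) Defs.arcsinh).
    + auto_derive. auto. ring.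
    + apply d_arcsinh.
  - intros c Hc. pose proof (sq_ge1 c).
    assert (/ sqh c <= 1). { rewrite <- Rinv_1. apply Rinv_le_contravar; lra. } lra.
Qed.

Lemma L4b t : 0 <= t -> ln (1 + t) <= Defs.arcsinh t.
Proof. intros Ht. rewrite arcsinh_sq. apply ln_le. lra. pose proof (sq_ge1 t). lra. Qed.

Lemma L4c t : 0 < t -> 0 < Defs.arcsinh t.
Proof. intros Ht. rewrite arcsinh_sq, <- ln_1. apply ln_increasing. lra. pose proof (sq_ge1 t). lra. Qed.

Lemma L5 t : 0 <= t -> t / sqh t <= Defs.arcsinh t.
Proof.
  intros Ht.
  assert (H := mvt_le (fun t => Defs.arcsinh t - t / sqh t) (fun t => / sqh t - / (sqh t ^ 3)) 0 t).
  cbv beta in H. rewrite arcsinh0, sq0 in H.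
  assert (0 <= Defs.arcsinh t - t / sqh t); [|lra].
  replace 0 with (0 - 0 / 1) by field. apply H; [lra| |].
  - intros c Hc. apply (is_derive_minus Defs.arcsinh (fun t => t / sqh t)).
    + apply d_arcsinh.
    + unfold sqh. auto_derive.
      { replace (c * (c * 1)) with (c ^ 2) by ring. fold (sqh c).
        pose proof (pow2_ge_0 c). pose proof (sq_pos c). repeat split; lra. }
      replace (c * (c * 1)) with (c ^ 2) by ring. fold (sqh c).
      pose proof (sq_pos c). pose proof (sq_sq c). field_simplify; try lra.
      replace (sqh c ^ 2) with (1 + c ^ 2) by (rewrite <- H1; ring). field. lra.
  - intros c Hc. pose proof (sq_ge1 c). pose proof (sq_pos c).
    assert (E : / sqh c - / sqh c ^ 3 = (sqh c ^ 2 - 1) / sqh c ^ 3) by (field; lra).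
    rewrite E. unfold Rdiv. apply Rmult_le_pos. nra.
    apply Rlt_le, Rinv_0_lt_compat. apply pow_lt. lra.
Qed.

Lemma L6 x : 0 <= x -> h4 x <= h5 x.
Proof.
  intros Hx.
  assert (H := mvt_le (fun x => h5 x - h4 x)
    (fun x => Defs.arcsinh (x/2) - (Defs.arcsinh (x/2) / 2 + x / (4 * sqh (x/2)))) 0 x).
  cbv beta in H. rewrite h4_0, h5_0 in H.
  assert (0 <= h5 x - h4 x); [|lra].
  replace 0 with (0 - 0) by ring. apply H; [lra| |].
  - intros c Hc. apply (is_derive_minus h5 h4). apply d_h5. apply d_h4.
  - intros c Hc. pose proof (L5 (c/2) ltac:(lra)). pose proof (sq_pos (c/2)).
    assert (E : c / (4 * sqh (c/2)) = (c/2 / sqh (c/2)) / 2) by (field; lra).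
    rewrite E. lra.
Qed.

Lemma L7 x : 0 <= x -> h5 x <= h2 x.
Proof.
  intros Hx.
  assert (H := mvt_le (fun x => h2 x - h5 x) (fun x => ln (1 + x) - Defs.arcsinh (x/2)) 0 x).
  cbv beta in H. rewrite h2_0, h5_0 in H.
  assert (0 <= h2 x - h5 x); [|lra].
  replace 0 with (0 - 0) by ring. apply H; [lra| |].
  - intros c Hc. apply (is_derive_minus h2 h5). apply d_h2; lra. apply d_h5.
  - intros c Hc. rewrite arcsinh_sq. pose proof (sq_le (c/2) ltac:(lra)).
    assert (ln (c / 2 + sqh (c / 2)) <= ln (1 + c)); [|lra].
    apply ln_le. apply tsq_pos. lra.
Qed.

Lemma L8 x : 0 <= x -> h5 x <= x ^ 2 / 4.
Proof.
  intros Hx.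
  assert (H := mvt_le (fun x => x ^ 2 / 4 - h5 x) (fun x => x / 2 - Defs.arcsinh (x/2)) 0 x).
  cbv beta in H. rewrite h5_0 in H.
  assert (0 <= x ^ 2 / 4 - h5 x); [|lra].
  replace 0 with (0 ^ 2 / 4 - 0) by field. apply H; [lra| |].
  - intros c Hc. apply (is_derive_minus (fun x => x ^ 2 / 4) h5).
    + auto_derive. auto. field.
    + apply d_h5.
  - intros c Hc. pose proof (L4 (c/2) ltac:(lra)). lra.
Qed.

Lemma L9 x : 0 <= x -> h4 x <= x ^ 2 / 4.
Proof. intros Hx. unfold h4. pose proof (L4 (x/2) ltac:(lra)).
  replace (x ^ 2 / 4) with (x / 2 * (x / 2)) by field. apply Rmult_le_compat_l; lra. Qed.

Lemma h2_strict u v : 0 <= u < v -> h2 u < h2 v.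
Proof.
  intros H. apply (mvt_lt h2 (fun x => ln (1 + x))); auto.
  - intros c Hc. apply d_h2; lra.
  - intros c Hc. rewrite <- ln_1. apply ln_increasing; lra.
Qed.

Lemma h4_strict u v : 0 <= u < v -> h4 u < h4 v.
Proof.
  intros H. apply (mvt_lt h4 (fun x => Defs.arcsinh (x/2) / 2 + x / (4 * sqh (x/2)))); auto.
  - intros c Hc. apply d_h4.
  - intros c Hc. pose proof (L4c (c/2) ltac:(lra)). pose proof (sq_pos (c/2)).
    assert (0 < c / (4 * sqh (c / 2))). { apply Rdiv_lt_0_compat; lra. } lra.
Qed.

Lemma h5_strict u v : 0 <= u < v -> h5 u < h5 v.
Proof.
  intros H. apply (mvt_lt h5 (fun x => Defs.arcsinh (x/2))); auto.
  - intros c Hc. apply d_h5.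
  - intros c Hc. apply L4c; lra.
Qed.


Lemma iib x : 0 <= x -> (x / 2) * ln (1 + x / 2) <= h4 x.
Proof. intros Hx. unfold h4. apply Rmult_le_compat_l. lra. apply L4b. lra. Qed.

Lemma ln4 : 1 <= ln 4.
Proof. replace 1 with (ln (exp 1)) at 1 by apply ln_exp. apply ln_le. apply exp_pos. pose proof exp_le_3. lra. Qed.

Lemma cont_of (h df : R -> R) x : is_derive h x (df x) -> continuity_pt h x.
Proof. intros H. apply derivable_continuous_pt. exists (df x). apply is_derive_Reals. exact H. Qed.

Lemma hinv_spec (h : R -> R) y : 0 <= y -> h 0 = 0 ->
  (forall x, 0 <= x -> continuity_pt h x) -> (forall x, 0 <= x -> h4 x <= h x) ->
  0 <= hinv h y /\ h (hinv h y) = y.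
Proof.
  intros Hy H0 Hc H4. unfold hinv. apply epsilon_spec.
  destruct (Req_dec y 0) as [->|Hne]. { exists 0. split; [lra|auto]. }
  set (X := 2 * y + 6).
  assert (HX : y < h X).
  { pose proof (iib X ltac:(unfold X; lra)). pose proof (H4 X ltac:(unfold X; lra)).
    assert (1 <= ln (1 + X / 2)). { eapply Rle_trans. apply ln4. apply ln_le; unfold X; lra. }
    assert (X / 2 <= X / 2 * ln (1 + X / 2)). { assert (0 <= X/2) by (unfold X; lra). nra. }
    unfold X in *; lra. }
  destruct (Ranalysis5.IVT_interv (fun x => h x - y) 0 X) as [z [Hz Hz']].
  - intros a Ha. apply (continuity_pt_minus h (fun _ => y)). apply Hc; lra. apply continuity_pt_const. intros u v; auto.
  - unfold X; lra.
  - rewrite H0; lra.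
  - lra.
  - exists z. split; lra.
Qed.


Lemma lim0 f g : (forall x, 0 < x -> Rabs (f x / g x - 1) <= x) -> equiv_at_0plus f g.
Proof.
  intros H. unfold equiv_at_0plus. apply filterlim_locally. intros eps.
  exists eps. intros y Hy Hpos. apply ballR.
  change (Rabs (y - 0) < eps) in Hy. rewrite Rminus_0_r, Rabs_pos_eq in Hy by lra.
  pose proof (H y Hpos). lra.
Qed.

Lemma liminf f g C : (forall x, 3 <= x -> Rabs (f x / g x - 1) <= C / ln x) -> equiv_at_infty f g.
Proof.
  intros H. unfold equiv_at_infty. apply filterlim_locally. intros eps.
  pose proof (cond_pos eps) as He.
  exists (Rmax 3 (exp ((Rabs C + 1) / eps))). intros x Hx. apply ballR.
  pose proof (Rmax_l 3 (exp ((Rabs C + 1) / eps))).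
  pose proof (Rmax_r 3 (exp ((Rabs C + 1) / eps))).
  assert (HL : (Rabs C + 1) / eps < ln x).
  { rewrite <- (ln_exp ((Rabs C + 1) / eps)) at 1. apply ln_increasing. apply exp_pos. lra. }
  assert (0 < (Rabs C + 1) / eps). { apply Rdiv_lt_0_compat. pose proof (Rabs_pos C). lra. lra. }
  assert (HLp : 0 < ln x) by lra.
  eapply Rle_lt_trans. apply H. lra.
  apply Rmult_lt_reg_r with (ln x). lra. unfold Rdiv. rewrite Rmult_assoc, Rinv_l by lra.
  apply Rmult_lt_compat_l with (r := eps) in HL; [|lra].
  replace (eps * ((Rabs C + 1) / eps)) with (Rabs C + 1) in HL by (field; lra).
  pose proof (Rle_abs C). lra.
Qed.

Lemma ratio_bd2 F G e : 0 < G -> (1 - e) * G <= F <= (1 + e) * G -> Rabs (F / G - 1) <= e.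
Proof.
  intros HG [H1 H2]. apply Rabs_le. split.
  - apply Rmult_le_reg_r with G; auto. unfold Rdiv. rewrite Rmult_minus_distr_r, Rmult_assoc, Rinv_l by lra. lra.
  - apply Rmult_le_reg_r with G; auto. unfold Rdiv. rewrite Rmult_minus_distr_r, Rmult_assoc, Rinv_l by lra. lra.
Qed.

Lemma inf_bd F G B C L : 0 < G -> 0 < L -> Rabs (F - G) <= B -> B * L <= C * G ->
  Rabs (F / G - 1) <= C / L.
Proof.
  intros HG HL H1 H2.
  replace (F / G - 1) with ((F - G) / G) by (field; lra).
  unfold Rdiv. rewrite Rabs_mult, (Rabs_pos_eq (/ G)) by (apply Rlt_le, Rinv_0_lt_compat; lra).
  apply Rmult_le_reg_r with (G * L). nra.
  replace (Rabs (F - G) * / G * (G * L)) with (Rabs (F - G) * L) by (field; lra).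
  replace (C * / L * (G * L)) with (C * G) by (field; lra). nra.
Qed.

Lemma A1 x : 0 < x -> x ^ 2 / 2 - x ^ 3 / 6 <= h2 x <= x ^ 2 / 2.
Proof.
  intros Hx. split; [|apply L2; lra].
  eapply Rle_trans; [|apply L3; lra].
  assert (E : 3 * x ^ 2 / (2 * x + 6) - (x ^ 2 / 2 - x ^ 3 / 6) = x ^ 4 / (6 * (x + 3))) by (field; lra).
  assert (0 <= x ^ 4 / (6 * (x + 3))).
  { unfold Rdiv. apply Rmult_le_pos. pose proof (pow_le x 4). lra. apply Rlt_le, Rinv_0_lt_compat. lra. }
  set (P := 3 * x ^ 2 / (2 * x + 6)) in *. set (Q := x ^ 4 / (6 * (x + 3))) in *. lra.
Qed.

Lemma ln_low u : 0 <= u -> u - u ^ 2 / 2 <= ln (1 + u).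
Proof.
  intros Hu. eapply Rle_trans; [|apply L1; lra].
  assert (E : 2 * u / (2 + u) - (u - u ^ 2 / 2) = u ^ 3 / (2 * (2 + u))) by (field; lra).
  assert (0 <= u ^ 3 / (2 * (2 + u))).
  { unfold Rdiv. apply Rmult_le_pos. pose proof (pow_le u 3). lra. apply Rlt_le, Rinv_0_lt_compat. lra. }
  set (P := 2 * u / (2 + u)) in *. set (Q := u ^ 3 / (2 * (2 + u))) in *. lra.
Qed.

Lemma A2 x : 0 < x -> x ^ 2 / 4 - x ^ 3 / 16 <= h4 x /\ h4 x <= h5 x /\ h5 x <= x ^ 2 / 4 /\ h4 x <= x ^ 2 / 4.
Proof.
  intros Hx. split; [|split; [apply L6; lra|split; [apply L8; lra| apply L9; lra]]].
  eapply Rle_trans; [|apply iib; lra].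
  pose proof (ln_low (x/2) ltac:(lra)).
  apply Rle_trans with (x / 2 * (x / 2 - (x / 2) ^ 2 / 2)). right; field.
  apply Rmult_le_compat_l; lra.
Qed.

Lemma Finf x : 3 <= x ->
  1 <= ln x /\ ln x <= x /\
  0 <= ln (1 + x) - ln x /\ x * (ln (1 + x) - ln x) <= 1 /\ ln (1 + x) - ln x <= 1/3 /\
  ln x <= Defs.arcsinh (x/2) /\ Defs.arcsinh (x/2) <= ln (1 + x) /\
  x / 2 <= sqh (x/2) <= x / 2 + 1.
Proof.
  intros Hx.
  assert (HL1 : 1 <= ln x).
  { replace 1 with (ln (exp 1)) by apply ln_exp. apply ln_le. apply exp_pos. pose proof exp_le_3. lra. }
  assert (Hu : ln (1 + x) - ln x <= 1 / x).
  { rewrite <- ln_div by lra. pose proof (ln_le_m1 ((1 + x) / x)).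
    assert (0 < (1 + x) / x) by (apply Rdiv_lt_0_compat; lra).
    replace ((1 + x) / x - 1) with (1 / x) in H by (field; lra). lra. }
  assert (Hu0 : ln x <= ln (1 + x)) by (apply ln_le; lra).
  pose proof (sq_gt (x/2)). pose proof (sq_le (x/2) ltac:(lra)).
  repeat split.
  - exact HL1.
  - pose proof (ln_le_m1 x). lra.
  - lra.
  - apply Rmult_le_reg_r with (/ x). apply Rinv_0_lt_compat; lra.
    rewrite Rmult_comm, <- Rmult_assoc, Rinv_l, Rmult_1_l, Rmult_1_l by lra. unfold Rdiv in Hu. lra.
  - assert (1 / x <= 1 / 3). { unfold Rdiv. rewrite !Rmult_1_l. apply Rinv_le_contravar; lra. } lra.
  - rewrite arcsinh_sq. apply ln_le. lra. lra.
  - rewrite arcsinh_sq. apply ln_le. apply tsq_pos. lra.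
  - lra.
  - lra.
Qed.

Lemma iii_a0 : equiv_at_0plus h2 (fun x => x ^ 2 / 2).
Proof. apply lim0. intros x Hx. pose proof (A1 x Hx). apply ratio_bd2. nra. nra. Qed.
Lemma iii_b0 : equiv_at_0plus h4 (fun x => x ^ 2 / 4).
Proof. apply lim0. intros x Hx. pose proof (A2 x Hx). apply ratio_bd2. nra. nra. Qed.
Lemma iii_c0 : equiv_at_0plus h5 (fun x => x ^ 2 / 4).
Proof. apply lim0. intros x Hx. pose proof (A2 x Hx). apply ratio_bd2. nra. nra. Qed.
Lemma iii_d0 : equiv_at_0plus (fun x => h2 x - h4 x) (fun x => x ^ 2 / 4).
Proof. apply lim0. intros x Hx. pose proof (A1 x Hx). pose proof (A2 x Hx). apply ratio_bd2. nra. nra. Qed.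
Lemma iii_e0 : equiv_at_0plus (fun x => h2 x - h5 x) (fun x => x ^ 2 / 4).
Proof. apply lim0. intros x Hx. pose proof (A1 x Hx). pose proof (A2 x Hx). apply ratio_bd2. nra. nra. Qed.

Lemma h5_sq x : h5 x = x * Defs.arcsinh (x/2) - 2 * (sqh (x/2) - 1).
Proof. unfold h5. rewrite cosh_arcsinh. reflexivity. Qed.

Ltac infsetup x Hx :=
  destruct (Finf x Hx) as (HL1 & HLx & Hu0 & Hxu & Hu1 & Ha0 & Ha1 & Hs0 & Hs1);
  unfold h2, h4 in *; rewrite ?h5_sq;
  set (L := ln x) in *; set (l1 := ln (1 + x)) in *; set (a := Defs.arcsinh (x/2)) in *;
  set (s := sqh (x/2)) in *.

Lemma iii_ai : equiv_at_infty h2 (fun x => x * ln x).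
Proof.
  apply (liminf _ _ 4). intros x Hx. infsetup x Hx.
  apply inf_bd with (B := x + L + 2). nra. lra.
  - apply Rabs_le. split; nra.
  - nra.
Qed.

Lemma iii_bi : equiv_at_infty h4 (fun x => / 2 * x * ln x).
Proof.
  apply (liminf _ _ 1). intros x Hx. infsetup x Hx.
  apply inf_bd with (B := 1/2). nra. lra.
  - apply Rabs_le. split; nra.
  - nra.
Qed.

Lemma iii_ci : equiv_at_infty h5 (fun x => x * ln x).
Proof.
  apply (liminf _ _ 2). intros x Hx. infsetup x Hx.
  apply inf_bd with (B := x + 3). nra. lra.
  - apply Rabs_le. split; nra.
  - nra.
Qed.

Lemma iii_di : equiv_at_infty (fun x => h2 x - h4 x) (fun x => / 2 * x * ln x).
Proof.
  apply (liminf _ _ 6). intros x Hx. infsetup x Hx.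
  apply inf_bd with (B := x + L + 3). nra. lra.
  - apply Rabs_le. split; nra.
  - nra.
Qed.

Lemma iii_ei : equiv_at_infty (fun x => h2 x - h5 x) (fun x => ln x).
Proof.
  apply (liminf _ _ 3). intros x Hx. infsetup x Hx.
  apply inf_bd with (B := 3). lra. lra.
  - apply Rabs_le. split; nra.
  - nra.
Qed.


Lemma div_mono a b c : 0 < c -> a <= b -> a / c <= b / c.
Proof. intros Hc H. unfold Rdiv. apply Rmult_le_compat_r. apply Rlt_le, Rinv_0_lt_compat; lra. lra. Qed.

Lemma iia x : 0 <= x -> (x / 2) * ln (1 + x) <= h2 x.
Proof.
  intros Hx. pose proof (L1 x Hx). unfold h2.
  assert ((1 + x / 2) * (2 * x / (2 + x)) = x) by (field; lra).
  assert ((1 + x / 2) * (2 * x / (2 + x)) <= (1 + x / 2) * ln (1 + x)) by (apply Rmult_le_compat_l; lra).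
  lra.
Qed.

Lemma iia2 x : 0 <= x -> (x / 2) * ln (1 + x / 2) <= (x / 2) * ln (1 + x).
Proof. intros Hx. apply Rmult_le_compat_l. lra. apply ln_le; lra. Qed.

Lemma iva1 x : 0 < x -> / x * ln (1 + x) <= psi2 x.
Proof.
  intros Hx. unfold psi2. replace (/ x * ln (1 + x)) with ((x / 2) * ln (1 + x) / (x ^ 2 / 2)) by (field; lra).
  apply div_mono. nra. apply iia; lra.
Qed.

Lemma iva2 x : 0 < x -> / (1 + x / 3) <= psi2 x.
Proof.
  intros Hx. unfold psi2. replace (/ (1 + x / 3)) with (3 * x ^ 2 / (2 * x + 6) / (x ^ 2 / 2)) by (field; lra).
  apply div_mono. nra. apply L3; lra.
Qed.

Lemma ivb1 x : 0 < x -> 2 * / x * ln (1 + x / 2) <= psi4 x.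
Proof.
  intros Hx. unfold psi4. replace (2 * / x * ln (1 + x / 2)) with ((x / 2) * ln (1 + x / 2) / (x ^ 2 / 4)) by (field; lra).
  apply div_mono. nra. apply iib; lra.
Qed.

Lemma ivb2 x : 0 < x -> 1 / (1 + x / 2) <= psi4 x.
Proof.
  intros Hx. eapply Rle_trans; [|apply ivb1; auto].
  pose proof (L1 (x / 2) ltac:(lra)).
  replace (1 / (1 + x / 2)) with (2 * / x * (x / 2 / (1 + x / 2))) by (field; lra).
  apply Rmult_le_compat_l. apply Rlt_le. apply Rmult_lt_0_compat. lra. apply Rinv_0_lt_compat; lra.
  eapply Rle_trans; [|apply H].
  assert (E : 2 * (x / 2) / (2 + x / 2) - x / 2 / (1 + x / 2) = (x/2)^2 / ((2 + x/2) * (1 + x/2))) by (field; lra).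
  assert (0 <= (x/2)^2 / ((2 + x/2) * (1 + x/2))).
  { apply Rdiv_le_0_compat. apply pow2_ge_0. nra. }
  set (P := 2 * (x / 2) / (2 + x / 2)) in *. set (Q := x / 2 / (1 + x / 2)) in *. lra.
Qed.

Lemma psi45 x : 0 < x -> psi4 x <= psi5 x.
Proof. intros Hx. unfold psi4, psi5. apply div_mono. nra. apply L6; lra. Qed.


Lemma ib y : 0 <= y -> hinv h2 y <= hinv h5 y /\ hinv h5 y <= hinv h4 y.
Proof.
  intros Hy.
  destruct (hinv_spec h2 y Hy h2_0 (fun x Hx => cont_of h2 (fun x => ln (1 + x)) x (d_h2 x Hx))
     (fun x Hx => Rle_trans _ _ _ (L6 x Hx) (L7 x Hx))) as [P2 E2].
  destruct (hinv_spec h5 y Hy h5_0 (fun x Hx => cont_of h5 (fun x => Defs.arcsinh (x/2)) x (d_h5 x))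
     (fun x Hx => L6 x Hx)) as [P5 E5].
  destruct (hinv_spec h4 y Hy h4_0 (fun x Hx => cont_of h4 (fun x => Defs.arcsinh (x / 2) / 2 + x / (4 * sqh (x / 2))) x (d_h4 x))
     (fun x Hx => Rle_refl _)) as [P4 E4].
  split.
  - destruct (Rle_lt_dec (hinv h2 y) (hinv h5 y)) as [|Hlt]; auto.
    pose proof (h5_strict (hinv h5 y) (hinv h2 y) ltac:(lra)).
    pose proof (L7 (hinv h2 y) P2). lra.
  - destruct (Rle_lt_dec (hinv h5 y) (hinv h4 y)) as [|Hlt]; auto.
    pose proof (h4_strict (hinv h4 y) (hinv h5 y) ltac:(lra)).
    pose proof (L6 (hinv h5 y) P5). lra.
Qed.

Theorem lemma11 :
  (* (i)(a) *)
  (forall x : R, 0 <= x -> h2 x >= h5 x /\ h5 x >= h4 x) /\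
  (* (i)(b) *)
  (forall y : R, 0 <= y -> hinv h2 y <= hinv h5 y /\ hinv h5 y <= hinv h4 y) /\
  (* (ii)(a) *)
  (forall x : R, 0 <= x ->
     h2 x >= (x / 2) * ln (1 + x) /\ (x / 2) * ln (1 + x) >= (x / 2) * ln (1 + x / 2)) /\
  (* (ii)(b) *)
  (forall x : R, 0 <= x -> h4 x >= (x / 2) * ln (1 + x / 2)) /\
  (* (ii)(c) *)
  (forall x : R, 0 <= x -> h5 x >= (x / 2) * ln (1 + x / 2)) /\
  (* (iii)(a) *)
  (equiv_at_0plus h2 (fun x => x ^ 2 / 2) /\
   equiv_at_infty h2 (fun x => x * ln x)) /\
  (* (iii)(b) *)
  (equiv_at_0plus h4 (fun x => x ^ 2 / 4) /\
   equiv_at_infty h4 (fun x => / 2 * x * ln x)) /\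
  (* (iii)(c) *)
  (equiv_at_0plus h5 (fun x => x ^ 2 / 4) /\
   equiv_at_infty h5 (fun x => x * ln x)) /\
  (* (iii)(d) *)
  (equiv_at_0plus (fun x => h2 x - h4 x) (fun x => x ^ 2 / 4) /\
   equiv_at_infty (fun x => h2 x - h4 x) (fun x => / 2 * x * ln x)) /\
  (* (iii)(e) *)
  (equiv_at_0plus (fun x => h2 x - h5 x) (fun x => x ^ 2 / 4) /\
   equiv_at_infty (fun x => h2 x - h5 x) (fun x => ln x)) /\
  (* (iv)(a) *)
  (forall x : R, 0 < x ->
     psi2 x >= / x * ln (1 + x) /\ psi2 x >= / (1 + x / 3)) /\
  (* (iv)(b) *)
  (forall x : R, 0 < x ->
     psi4 x >= 2 * / x * ln (1 + x / 2) /\ psi4 x >= (1 / 2) / (1 + x / 2)) /\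
  (forall delta x : R, 0 < delta < 1 / 2 ->
     0 < x <= 2 * sqrt delta / sqrt (1 / 2 - delta) ->
     psi4 x >= (1 - delta) / (1 + x / 2)) /\
  (* (iv)(c) *)
  (forall x : R, 0 < x ->
     psi5 x >= 2 * / x * ln (1 + x / 2) /\ psi5 x >= 1 / (1 + x / 2)).
Proof.
  split. { intros x Hx. split; apply Rle_ge. apply L7; auto. apply L6; auto. }
  split. { exact ib. }
  split. { intros x Hx. split; apply Rle_ge. apply iia; auto. apply iia2; auto. }
  split. { intros x Hx. apply Rle_ge. apply iib; auto. }
  split. { intros x Hx. apply Rle_ge. eapply Rle_trans. apply iib; auto. apply L6; auto. }
  split. { split. exact iii_a0. exact iii_ai. }
  split. { split. exact iii_b0. exact iii_bi. }
  split. { split. exact iii_c0. exact iii_ci. }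
  split. { split. exact iii_d0. exact iii_di. }
  split. { split. exact iii_e0. exact iii_ei. }
  split. { intros x Hx. split; apply Rle_ge. apply iva1; auto. apply iva2; auto. }
  split. { intros x Hx. split; apply Rle_ge. apply ivb1; auto.
           eapply Rle_trans; [|apply ivb2; auto]. apply div_mono; lra. }
  split. { intros d x Hd Hx. apply Rle_ge. eapply Rle_trans; [|apply ivb2; lra]. apply div_mono; lra. }
  intros x Hx. split; apply Rle_ge.
  - eapply Rle_trans; [apply ivb1; auto|apply psi45; auto].
  - eapply Rle_trans; [apply ivb2; auto|apply psi45; auto].
Qed.
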